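(* Let $\phi:\mathbb{R}^N\to\mathbb{R}$ be a bounded Borel function with $\phi\in C^{1,1}(x)$ and $p_x\neq0$. Then $$\mathcal{L}_s[\phi](x)=\int_0^\infty L_\phi\Big(x,t\frac{p_x}{|p_x|},t\frac{p_x}{|p_x|}\Big)\,\mathrm{d}\mu_s(t).$$
   Context: Fix $N\ge1$ and $s\in(\frac12,1)$. Let $C_s=\frac{4^s s\,\Gamma(\frac12+s)}{\pi^{1/2}\Gamma(1-s)}$. Let $\mu_s$ be the Borel measure on $(0,\infty)$ with $\mathrm{d}\mu_s(t)=C_s t^{-1-2s}\,\mathrm{d}t$. For $\phi:\mathbb{R}^N\to\mathbb{R}$ and $x,y,\tilde y\in\mathbb{R}^N$ let $L_\phi(x,y,\tilde y)=\phi(x+y)+\phi(x-\tilde y)-2\phi(x)$. Define $$\mathcal{L}_s[\phi](x)=\sup_{|y|=1}\inf_{|\tilde y|=1}\int_0^\infty L_\phi(x,ty,t\tilde y)\,\mathrm{d}\mu_s(t),$$ where $\int_0^\infty$ means $\lim_{\delta\to0^+}\int_\delta^\infty$ (a value in $[-\infty,\infty]$). We say $\phi\in C^{1,1}(x)$ if there exist $p_x\in\mathbb{R}^N$ and $C_x,\eta_x>0$ with $|\phi(x+y)-\phi(x)-\langle p_x,y\rangle|\le C_x|y|^2$ for all $|y|<\eta_x$. *)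

(* Defs.v *)
(* R^N is rendered as row vectors 'rV[R]_N over an
   arbitrary realType R, with the EUCLIDEAN norm defined below (the library's
   norm on matrices is the sup norm, so we do not use it). *)
From HB Require Import structures.
From mathcomp Require Import all_boot all_order all_algebra.
From mathcomp Require Import all_classical all_reals all_analysis.
Set Implicit Arguments. Unset Strict Implicit. Unset Printing Implicit Defensive.
Import Order.TTheory GRing.Theory Num.Theory.
Import numFieldNormedType.Exports.
Local Open Scope classical_set_scope.
Local Open Scope ring_scope.

Section Defs.
Variable R : realType.
Variable N : nat.

Definition dotp (u v : 'rV[R]_N) : R := \sum_(i < N) u 0 i * v 0 i.
Definition enorm (v : 'rV[R]_N) : R := Num.sqrt (dotp v v).

Definition usphere : set 'rV[R]_N := [set y | enorm y = 1].

Definition borel_fun (phi : 'rV[R]_N -> R) : Prop :=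
  forall B : set R, measurable B ->
    <<s [set U : set 'rV[R]_N | open U] >> (phi @^-1` B).

Definition bounded_fun_on (phi : 'rV[R]_N -> R) : Prop :=
  exists M : R, forall z, `|phi z| <= M.

Definition C11_at (phi : 'rV[R]_N -> R) (x p : 'rV[R]_N) (C eta : R) : Prop :=
  0 < C /\ 0 < eta /\
  forall y, enorm y < eta ->
    `|phi (x + y) - phi x - dotp p y| <= C * enorm y ^+ 2.

Definition Lphi (phi : 'rV[R]_N -> R) (x y yt : 'rV[R]_N) : R :=
  phi (x + y) + phi (x - yt) - 2 * phi x.
End Defs.

Section Consts.
Variable R : realType.
Definition Gamma (z : R) : R :=
  Rintegral lebesgue_measure `]0, +oo[ (fun t => t `^ (z - 1) * expR (- t)).

Definition Cs (s : R) : R :=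
  (4 `^ s * s * Gamma (2^-1 + s)) / (Num.sqrt pi * Gamma (1 - s)).

Definition mus_dens (s t : R) : R := Cs s * t `^ (-1 - 2 * s).

Definition int_mus (s : R) (f : R -> R) : \bar R :=
  lim ((fun delta : R =>
          (\int[lebesgue_measure]_(t in `]delta, +oo[) (f t * mus_dens s t)%:E)%E)
       @ 0^'+).
End Consts.

Definition Ls (R : realType) (N : nat) (s : R) (phi : 'rV[R]_N -> R)
  (x : 'rV[R]_N) : \bar R :=
  ereal_sup [set ereal_inf [set int_mus s (fun t => Lphi phi x (t *: y) (t *: yt))
                           | yt in @usphere R N] | y in @usphere R N].

(* Main.v *)
Require Import Defs.
From HB Require Import structures.
From mathcomp Require Import all_boot all_order all_algebra.
From mathcomp Require Import all_classical all_reals all_analysis.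
From mathcomp Require Import ring lra.
From mathcomp Require Import measurable_realfun.
Import Order.TTheory GRing.Theory Num.Theory.
Local Open Scope ring_scope.

Module HelpersA.
Import Order.TTheory GRing.Theory Num.Theory.
Import numFieldNormedType.Exports.
Local Open Scope classical_set_scope.
Local Open Scope ring_scope.

Section Geo.
Variable R : realType.
Variable N : nat.
Implicit Types u v y : 'rV[R]_N.

Lemma dotpC u v : dotp u v = dotp v u.
Proof. by rewrite /dotp; apply: eq_bigr => i _; rewrite mulrC. Qed.

Lemma dotpZl a u v : dotp (a *: u) v = a * dotp u v.
Proof. by rewrite /dotp mulr_sumr; apply: eq_bigr => i _; rewrite mxE mulrA. Qed.

Lemma dotpZr a u v : dotp u (a *: v) = a * dotp u v.
Proof. by rewrite dotpC dotpZl dotpC. Qed.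

Lemma dotp_ge0 v : 0 <= dotp v v.
Proof. by apply: sumr_ge0 => i _; rewrite -expr2 sqr_ge0. Qed.

Lemma dotpBB u v : dotp (u - v) (u - v) = dotp u u - 2 * dotp u v + dotp v v.
Proof.
rewrite /dotp mulr_sumr -sumrB -big_split /=; apply: eq_bigr => i _.
rewrite !mxE; ring.
Qed.

Lemma dotp_eq0 v : dotp v v = 0 -> v = 0.
Proof.
move=> /eqP; rewrite psumr_eq0; last by move=> i _; rewrite -expr2 sqr_ge0.
move=> /allP h; apply/matrixP => i j; rewrite (ord1 i) mxE.
have := h j (mem_index_enum j); rewrite /= mulf_eq0 orbb => /eqP //.
Qed.

Lemma enorm_sqr v : enorm v ^+ 2 = dotp v v.
Proof. by rewrite /enorm sqr_sqrtr// dotp_ge0. Qed.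

Lemma enormZ a v : enorm (a *: v) = `|a| * enorm v.
Proof.
by rewrite /enorm dotpZl dotpZr mulrA -expr2 sqrtrM ?sqr_ge0// sqrtr_sqr.
Qed.

Lemma enorm_gt0 v : v != 0 -> 0 < enorm v.
Proof.
move=> v0; rewrite /enorm sqrtr_gt0 lt_def dotp_ge0 andbT.
by apply/eqP => /dotp_eq0 h; rewrite h eqxx in v0.
Qed.

Lemma sphere_dotp y : enorm y = 1 -> dotp y y = 1.
Proof. by move=> h; rewrite -enorm_sqr h expr1n. Qed.

Lemma sphere_dot_le u y : enorm u = 1 -> enorm y = 1 -> dotp u y <= 1.
Proof.
move=> /sphere_dotp hu /sphere_dotp hy.
have := dotp_ge0 (y - u); rewrite dotpBB hu hy dotpC => h; lra.
Qed.

Lemma sphere_dot_lt u y : enorm u = 1 -> enorm y = 1 -> y != u -> dotp u y < 1.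
Proof.
move=> hu hy yu; rewrite lt_neqAle sphere_dot_le// andbT.
apply/eqP => h; move: yu; rewrite -subr_eq0 => /eqP; apply.
apply: dotp_eq0; rewrite dotpBB (sphere_dotp _ hu) (sphere_dotp _ hy) dotpC h; lra.
Qed.
End Geo.

End HelpersA.
Import HelpersA.

Module HelpersB.
Import Order.TTheory GRing.Theory Num.Theory.
Import numFieldNormedType.Exports.
Local Open Scope classical_set_scope.
Local Open Scope ring_scope.

Section Meas.
Variable R : realType.
Variable N : nat.

Lemma borel_comp (phi : 'rV[R]_N -> R) (x y : 'rV[R]_N) :
  borel_fun phi -> measurable_fun setT (fun t : R => phi (x + t *: y)).
Proof.
move=> hm _ B mB; rewrite setTI.
set g := fun t : R => x + t *: y.
have cg : continuous g.
  move=> t.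
  have h1 : {for t, continuous (cst x : R -> 'rV[R]_N)} by exact: cst_continuous.
  have h2 : {for t, continuous (fun t : R => t *: y)}.
    by apply: continuousZr_tmp; exact: cvg_id.
  exact: (continuousD h1 h2).
pose X := [set A : set 'rV[R]_N | measurable (g @^-1` A)].
have sX : sigma_algebra setT X.
  split.
  - by rewrite /X /= preimage_set0.
  - move=> A; rewrite /X /= => mA.
    rewrite setTD -preimage_setC; exact: measurableC.
  - move=> F mF; rewrite /X /= preimage_bigcup; exact: bigcupT_measurable.
have oX : [set U : set 'rV[R]_N | open U] `<=` X.
  move=> U oU; apply: measurable_realfun.open_measurable; apply: open_comp => // z _; exact: cg.
have := smallest_sub sX oX (hm B mB).
by [].
Qed.
End Meas.

Section Lp.
Variable R : realType.
Variable N : nat.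

Lemma Lphi_meas (phi : 'rV[R]_N -> R) x y yt : borel_fun phi ->
  measurable_fun setT (fun t : R => Lphi phi x (t *: y) (t *: yt)).
Proof.
move=> hm.
have -> : (fun t : R => Lphi phi x (t *: y) (t *: yt)) =
   (fun t => (phi (x + t *: y) + phi (x + t *: (- yt))) - 2 * phi x).
  by apply/funext => t; rewrite /Lphi scalerN.
apply: measurable_funB; last exact: measurable_cst.
by apply: measurable_funD; exact: borel_comp.
Qed.

Lemma Lphi_approx (phi : 'rV[R]_N -> R) x p C eta y yt :
  C11_at phi x p C eta -> enorm y = 1 -> enorm yt = 1 ->
  forall t, 0 < t < eta ->
  `|Lphi phi x (t *: y) (t *: yt) - t * (dotp p y - dotp p yt)| <= 2 * C * t ^+ 2.
Proof.
move=> [C0 [e0 h]] hy hyt t /andP[t0 te].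
have h1 := h (t *: y).
rewrite enormZ hy mulr1 gtr0_norm// in h1.
have h2 := h ((- t) *: yt).
rewrite enormZ hyt mulr1 normrN gtr0_norm// in h2.
move: (h1 te) (h2 te); rewrite !dotpZr scaleNr /Lphi.
set a := phi (x + t *: y) - phi x - t * dotp p y.
set b := phi (x + - (t *: yt)) - phi x - - t * dotp p yt => ha hb.
have -> : phi (x + t *: y) + phi (x - t *: yt) - 2 * phi x -
   t * (dotp p y - dotp p yt) = a + b by rewrite /a /b; ring.
apply: le_trans (ler_normD _ _) _; lra.
Qed.
End Lp.

End HelpersB.
Import HelpersB.

Module HelpersC.
Import Order.TTheory GRing.Theory Num.Theory.
Import numFieldNormedType.Exports.
Local Open Scope classical_set_scope.
Local Open Scope ring_scope.

Section Pow.
Variable R : realType.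

Lemma powR_decr (u v e : R) : 0 < u -> u <= v -> e <= 0 -> v `^ e <= u `^ e.
Proof.
move=> u0 uv e0; have v0 : 0 < v by apply: lt_le_trans uv.
rewrite /powR !gt_eqF// ler_expR; apply: ler_wnM2l => //.
by rewrite ler_ln ?posrE.
Qed.

Lemma powR_dom (a t0 t : R) : 2 < a -> 0 < t0 -> t0 <= t ->
  t `^ (- a) <= (t0 `^ (- a) + t0 `^ (2 - a)) * (oneDsqr t)^-1.
Proof.
move=> a2 t00 tt0; have t0' : 0 < t by apply: lt_le_trans tt0.
have o0 : 0 < oneDsqr t by rewrite /oneDsqr ltr_pwDl// sqr_ge0.
rewrite ler_pdivlMr//.
have -> : t `^ (- a) * oneDsqr t = t `^ (- a) + t `^ (2 - a).
  have e2 : t `^ (2 - a) = t `^ (- a) * t ^+ 2.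
    rewrite addrC powRD; last by apply/implyP => _; rewrite gt_eqF.
    by rewrite powR_mulrn // ltW.
  by rewrite e2 /oneDsqr; ring.
apply: lerD; apply: powR_decr => //; lra.
Qed.
End Pow.

Section Core.
Variable R : realType.
Local Notation mu := (@lebesgue_measure R).

Lemma mus_dens_ge0 (s t : R) : 0 <= Cs s -> 0 <= mus_dens s t.
Proof. by move=> c0; rewrite /mus_dens mulr_ge0// powR_ge0. Qed.

Lemma mF_meas (s : R) (f : R -> R) : measurable_fun setT f ->
  measurable_fun setT (fun t => (f t * mus_dens s t)%:E).
Proof.
move=> mf; apply/measurable_EFinP; apply: measurable_funM => //.
apply: measurable_funM; first exact: measurable_cst.
exact: measurable_powR.
Qed.

Lemma neg_bound (s : R) (f : R -> R) (B t0 : R) :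
  2^-1 < s -> 0 <= Cs s -> measurable_fun setT f -> (forall t, `|f t| <= B) ->
  0 < t0 -> (forall t, 0 < t < t0 -> 0 <= f t) ->
  forall δ, 0 < δ ->
  (\int[mu]_(t in `]δ, +oo[) ((fun t => (f t * mus_dens s t)%:E)^\- t)
     <= (B * Cs s * (t0 `^ (-(1+2*s)) + t0 `^ (2 - (1+2*s))) * (pi / 2))%:E)%E.
Proof.
move=> hs c0 mf fB t00 fpos δ δ0.
set K := t0 `^ (-(1+2*s)) + t0 `^ (2 - (1+2*s)).
have B0 : 0 <= B by apply: le_trans (fB 0); exact: normr_ge0.
have K0 : 0 <= K by rewrite addr_ge0// powR_ge0.
set k := B * Cs s * K.
have k0 : 0 <= k by rewrite mulr_ge0// mulr_ge0.
have mF := mF_meas s _ mf.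
have mi : measurable_fun setT (fun t : R => (oneDsqr t)^-1).
  apply: continuous_measurable_fun; exact: continuous_oneDsqrV.
have mg : measurable_fun setT (fun t : R => (k * (oneDsqr t)^-1)%:E).
  apply/measurable_EFinP; apply: measurable_funM => //; exact: measurable_cst.
have o0 (t : R) : 0 < oneDsqr t by rewrite /oneDsqr ltr_pwDl// sqr_ge0.
apply: (@le_trans _ _ (\int[mu]_(t in `]δ, +oo[) (k * (oneDsqr t)^-1)%:E)%E).
  apply: ge0_le_integral => //.
  - exact: (measurable_funS measurableT (@subsetT _ _) (measurable_funeneg mF)).
  - exact: (measurable_funS measurableT (@subsetT _ _) mg).
  move=> t /=; rewrite in_itv /= andbT => δt.
  have t0' : 0 < t by apply: lt_trans δt.
  rewrite funenegE -EFinN -EFin_max lee_fin ge_max.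
  have kg : 0 <= k / oneDsqr t by rewrite mulr_ge0 // invr_ge0 ltW.
  apply/andP; split; last exact: kg.
  case: (boolP (t < t0)) => tt0.
    apply: le_trans kg.
    rewrite oppr_le0 mulr_ge0 ?mus_dens_ge0//; apply: fpos; by rewrite t0' tt0.
  have h1 : -(f t * mus_dens s t) <= `|f t| * mus_dens s t.
    by rewrite -mulNr ler_wpM2r ?mus_dens_ge0// -normrN ler_norm.
  have h2 : `|f t| * mus_dens s t <= B * mus_dens s t.
    by rewrite ler_wpM2r ?mus_dens_ge0.
  have h3 : B * mus_dens s t <= k / oneDsqr t.
    rewrite /k /mus_dens -(mulrA B) -mulrA; apply: ler_wpM2l => //.
    rewrite -mulrA; apply: ler_wpM2l => //.
    have -> : -1 - 2 * s = - (1 + 2 * s) by ring.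
    rewrite /K; apply: powR_dom => //.
    have : 1 < 2 * s.
      by rewrite -ltr_pdivrMl// mulr1.
    lra.
    by rewrite leNgt.
  exact: (le_trans h1 (le_trans h2 h3)).
have hsub : (\int[mu]_(t in `]δ, +oo[) (k * (oneDsqr t)^-1)%:E <=
    \int[mu]_(t in `[0%R, +oo[) (k * (oneDsqr t)^-1)%:E)%E.
  apply: ge0_subset_integral => //.
  - exact: (measurable_funS measurableT (@subsetT _ _) mg).
  - by move=> t _; rewrite lee_fin mulr_ge0 // invr_ge0 ltW.
  - move=> t /=; rewrite !in_itv /= !andbT => /ltW; exact: le_trans (ltW δ0).
have heq : (\int[mu]_(t in `[0%R, +oo[) (k * (oneDsqr t)^-1)%:E = (k * (pi / 2))%:E)%E.
  under eq_integral do rewrite EFinM.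
  rewrite ge0_integralZl_EFin//.
  - by rewrite integral0y_oneDsqr -EFinM.
  - apply/measurable_EFinP; exact: (measurable_funS measurableT (@subsetT _ _) mi).
by rewrite -heq.
Qed.
End Core.

Section Core2.
Variable R : realType.
Local Notation mu := (@lebesgue_measure R).

Lemma powR_addr1 (x r : R) : 0 < x -> x `^ r * x = x `^ (r + 1).
Proof.
move=> x0; rewrite powRD ?powRr1 ?ltW//.
by apply/implyP => _; rewrite gt_eqF.
Qed.

Lemma pos_growth (s : R) (f : R -> R) (d t0 : R) :
  2^-1 < s -> 0 < Cs s -> measurable_fun setT f -> 0 < d -> 0 < t0 ->
  (forall t, 0 < t < t0 -> d * t <= f t) ->
  forall M : R, \forall δ \near 0^'+,
   (M%:E <= \int[mu]_(t in `]δ, +oo[) ((fun t => (f t * mus_dens s t)%:E)^\+ t))%E.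
Proof.
move=> hs c0 mf d0 t00 fge M.
have h2s : 1 < 2 * s by rewrite -ltr_pdivrMl// mulr1.
set c := Cs s.
set e := 1 - 2 * s.
have e0 : e < 0 by rewrite /e; lra.
set X := Num.max 1 (2 * M / (d * c)).
have X0 : 0 < X by rewrite lt_max ltr01.
have dc0 : 0 < d * c by rewrite mulr_gt0.
have XM : M <= d * c * X / 2.
  have : 2 * M / (d * c) <= X by rewrite le_max lexx orbT.
  rewrite ler_pdivrMr// => h.
  rewrite ler_pdivlMr// (mulrC M); apply: le_trans h _; rewrite mulrC //.
set ε1 := X `^ (e^-1).
have ε10 : 0 < ε1 by rewrite powR_gt0.
have ε1e : ε1 `^ e = X.
  by rewrite -powRrM mulVf ?lt_eqF// powRr1// ltW.
set δ0 := Num.min (t0 / 2) (ε1 / 2).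
have δ00 : 0 < δ0 by rewrite lt_min !divr_gt0.
have mF := @mF_meas R s f mf.
near=> δ.
have hδ0 : 0 < δ by near: δ; exact: nbhs_right_gt.
have hδ1 : δ < δ0 by near: δ; exact: nbhs_right_lt.
have hδt : 2 * δ < t0.
  have : δ < t0 / 2 by apply: lt_le_trans hδ1 _; rewrite ge_min lexx.
  rewrite ltr_pdivlMr// mulrC //.
have hδe : 2 * δ <= ε1.
  have : δ <= ε1 / 2 by apply: ltW; apply: lt_le_trans hδ1 _; rewrite ge_min lexx orbT.
  rewrite ler_pdivlMr// mulrC //.
set v := d * c * (2 * δ) `^ (e - 1).
have v0 : 0 <= v by rewrite mulr_ge0 ?powR_ge0// ltW.
have hsub : (\int[mu]_(t in `]δ, (2 * δ)%R[) ((fun t => (f t * mus_dens s t)%:E)^\+ t)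
    <= \int[mu]_(t in `]δ, +oo[) ((fun t => (f t * mus_dens s t)%:E)^\+ t))%E.
  apply: ge0_subset_integral => //.
  - exact: (measurable_funS measurableT (@subsetT _ _) (measurable_funepos mF)).
  - by move=> t /=; rewrite !in_itv /= andbT => /andP[].
have hle : (\int[mu]_(t in `]δ, (2 * δ)%R[) (cst v%:E t)
    <= \int[mu]_(t in `]δ, (2 * δ)%R[) ((fun t => (f t * mus_dens s t)%:E)^\+ t))%E.
  apply: ge0_le_integral => //.
  - exact: (measurable_funS measurableT (@subsetT _ _) (measurable_funepos mF)).
  move=> t /=; rewrite in_itv /= => /andP[δt t2].
  have t0' : 0 < t by apply: lt_trans δt.
  rewrite funeposE -EFin_max lee_fin le_max; apply/orP; left.
  have ft : d * t <= f t by apply: fge; rewrite t0' /=; apply: lt_trans hδt.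
  apply: (@le_trans _ _ (d * t * mus_dens s t)); last first.
    by rewrite ler_wpM2r// mus_dens_ge0// ltW.
  have ee : (-1 - 2 * s) + 1 = e - 1 by rewrite /e; ring.
  rewrite /v /mus_dens /c.
  have -> : d * t * (Cs s * t `^ (-1 - 2 * s)) = d * Cs s * (t `^ (-1 - 2 * s) * t).
    by ring.
  apply: ler_wpM2l; first by rewrite ltW.
  rewrite powR_addr1// ee; apply: powR_decr => //; first exact: ltW.
  by rewrite subr_le0 ltW// (lt_trans e0).
have key : X <= (2 * δ) `^ e.
  rewrite -ε1e; apply: powR_decr => //; [by rewrite mulr_gt0 | exact: ltW].
have E : v * (2 * δ - δ) = d * c * (2 * δ) `^ e / 2.
  rewrite /v -[in RHS](subrK 1 e) -powR_addr1 ?mulr_gt0//.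
  by field.
apply: le_trans hsub; apply: le_trans hle.
rewrite integral_cst //= lebesgue_measure_itv /= lte_fin.
have -> : (δ < 2 * δ) = true by apply/idP; rewrite ltr_pMl// ltr1n.
rewrite -EFinB -EFinM lee_fin E.
apply: le_trans XM _; rewrite ler_pM2r// ler_pM2l//.
Unshelve. all: by end_near.
Qed.
End Core2.

Section Lims.
Variable R : realType.
Local Notation mu := (@lebesgue_measure R).

Lemma int_mus_pinf (s : R) (f : R -> R) (B d t0 : R) :
  2^-1 < s -> 0 < Cs s -> measurable_fun setT f -> (forall t, `|f t| <= B) ->
  0 < d -> 0 < t0 -> (forall t, 0 < t < t0 -> d * t <= f t) ->
  int_mus s f = +oo%E.
Proof.
move=> hs c0 mf fB d0 t00 fge.
have fpos t : 0 < t < t0 -> 0 <= f t.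
  move=> /[dup] /andP[t0' _] /fge h; apply: le_trans h; by rewrite mulr_ge0// ltW.
have nb := @neg_bound R s f B t0 hs (ltW c0) mf fB t00 fpos.
set T := (B * _ * _ * _) in nb.
rewrite /int_mus; apply: cvg_lim => //.
apply/cvgeyPge => A.
apply: filterS2 (@pos_growth R s f d t0 hs c0 mf d0 t00 fge (A + T)) (nbhs_right_gt 0).
move=> δ hP hδ; rewrite integralE.
have := leeB hP (nb δ hδ).
by rewrite -EFinB addrK.
Qed.

Lemma int_mus_ninf (s : R) (f : R -> R) (B d t0 : R) :
  2^-1 < s -> 0 < Cs s -> measurable_fun setT f -> (forall t, `|f t| <= B) ->
  0 < d -> 0 < t0 -> (forall t, 0 < t < t0 -> f t <= - (d * t)) ->
  int_mus s f = -oo%E.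
Proof.
move=> hs c0 mf fB d0 t00 fle.
set g := fun t => - f t.
have mg : measurable_fun setT g by apply: measurableT_comp => //.
have gB t : `|g t| <= B by rewrite /g normrN.
have gge t : 0 < t < t0 -> d * t <= g t by move=> /fle; rewrite /g lerNr.
have gpos t : 0 < t < t0 -> 0 <= g t.
  move=> /[dup] /andP[t0' _] /gge h; apply: le_trans h; by rewrite mulr_ge0// ltW.
have nb := @neg_bound R s g B t0 hs (ltW c0) mg gB t00 gpos.
set T := (B * _ * _ * _) in nb.
have Eg : (fun t => (g t * mus_dens s t)%:E) = (\- (fun t => (f t * mus_dens s t)%:E))%E.
  by apply/funext => t; rewrite /g /= mulNr EFinN.
rewrite /int_mus; apply: cvg_lim => //.
apply/cvgeNyPle => A.
apply: filterS2 (@pos_growth R s g d t0 hs c0 mg d0 t00 gge (T - A)) (nbhs_right_gt 0).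
move=> δ hP hδ; rewrite integralE.
have h1 := nb δ hδ; rewrite Eg funenegN in h1; rewrite Eg funeposN in hP.
have := leeB h1 hP.
rewrite -EFinB (_ : T - (T - A) = A) //; ring.
Qed.
End Lims.

End HelpersC.
Import HelpersC.

Module HelpersD.
Import Order.TTheory GRing.Theory Num.Theory.
Import numFieldNormedType.Exports.
Local Open Scope classical_set_scope.
Local Open Scope ring_scope.

Section Final.
Variable R : realType.
Local Notation mu := (@lebesgue_measure R).

Lemma Gamma_ge0 (z : R) : 0 <= Gamma z.
Proof.
rewrite /Gamma /Rintegral; apply: fine_ge0; apply: integral_ge0 => t _.
by rewrite lee_fin mulr_ge0 ?powR_ge0 ?expR_ge0.
Qed.

Lemma Cs_ge0 (s : R) : 0 <= s -> 0 <= Cs s.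
Proof.
move=> s0; rewrite /Cs divr_ge0// ?mulr_ge0 ?powR_ge0 ?Gamma_ge0 ?sqrtr_ge0//.
Qed.

Lemma int_mus_c0 (s : R) f : Cs s = 0 -> int_mus s f = 0%E.
Proof.
move=> c0; rewrite /int_mus /mus_dens c0.
have -> : (fun δ : R => (\int[mu]_(t in `]δ, +oo[) (f t * (0 * t `^ (-1 - 2 * s)))%:E)%E)
   = fun=> 0%E.
  by apply/funext => δ; apply: integral0_eq => t _; rewrite mul0r mulr0.
by apply: cvg_lim => //; exact: cvg_cst.
Qed.

Lemma supinf (V : Type) (S : set V) (I : V -> V -> \bar R) u :
  S u -> (forall yt, S yt -> (I u u <= I u yt)%E) ->
  (forall y, S y -> exists2 yt, S yt & (I y yt <= I u u)%E) ->
  ereal_sup [set ereal_inf [set I y yt | yt in S] | y in S] = I u u.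
Proof.
move=> Su hlow hup; apply/eqP; rewrite eq_le; apply/andP; split.
  apply: ub_ereal_sup => _ [y Sy <-].
  have [yt Syt h] := hup y Sy.
  by apply: le_trans h; apply: ereal_inf_lbound; exists yt.
apply: (@le_trans _ _ (ereal_inf [set I u yt | yt in S])).
  by apply: le_ereal_inf_tmp => _ [yt Syt <-]; exact: hlow.
by apply: ereal_sup_ubound; exists u.
Qed.
End Final.

Section Final2.
Variable R : realType.
Variable N : nat.

Lemma Lphi_bound (phi : 'rV[R]_N -> R) M x y yt :
  (forall z, `|phi z| <= M) -> `|Lphi phi x y yt| <= 4 * M.
Proof.
move=> hM; rewrite /Lphi.
apply: le_trans (ler_normB _ _) _.
apply: le_trans (lerD (ler_normD _ _) (lexx _)) _.
rewrite normrM ger0_norm//.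
have := hM (x + y); have := hM (x - yt); have := hM x; lra.
Qed.

Lemma I_inf (s : R) (phi : 'rV[R]_N -> R) x p C eta y yt :
  2^-1 < s -> 0 < Cs s -> bounded_fun_on phi -> borel_fun phi ->
  C11_at phi x p C eta -> enorm y = 1 -> enorm yt = 1 ->
  (0 < dotp p y - dotp p yt ->
    int_mus s (fun t => Lphi phi x (t *: y) (t *: yt)) = +oo%E) /\
  (dotp p y - dotp p yt < 0 ->
    int_mus s (fun t => Lphi phi x (t *: y) (t *: yt)) = -oo%E).
Proof.
move=> hs c0 [M hM] hm hC hy hyt.
have [C0 [e0 _]] := hC.
have happ := @Lphi_approx R N phi x p C eta y yt hC hy hyt.
have mf := @Lphi_meas R N phi x y yt hm.
have fB := fun t => @Lphi_bound phi M x (t *: y) (t *: yt) hM.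
set Dv := dotp p y - dotp p yt.
split => hD.
- pose t0 := Num.min eta (Dv / (4 * C)).
  have t00 : 0 < t0 by rewrite lt_min e0 divr_gt0// mulr_gt0.
  apply: (@int_mus_pinf R s _ (4 * M) (Dv / 2) t0 hs c0 mf fB) => //.
    by rewrite divr_gt0.
  move=> t /andP[t0' tt0].
  have te : t < eta by apply: lt_le_trans tt0 _; rewrite ge_min lexx.
  have tD : t < Dv / (4 * C) by apply: lt_le_trans tt0 _; rewrite ge_min lexx orbT.
  have := happ t; rewrite t0' te => /(_ isT) h.
  rewrite -/Dv ler_norml in h; case/andP: h => h _.
  have Ct : 4 * C * t <= Dv.
    by have := ltW tD; rewrite ler_pdivlMr ?mulr_gt0// mulrC.
  have Ct2 : 4 * C * t * t <= Dv * t by rewrite ler_wpM2r// ltW.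
  rewrite expr2 in h; lra.
- pose t0 := Num.min eta ((- Dv) / (4 * C)).
  have t00 : 0 < t0 by rewrite lt_min e0 divr_gt0 ?mulr_gt0// oppr_gt0.
  apply: (@int_mus_ninf R s _ (4 * M) (- Dv / 2) t0 hs c0 mf fB) => //.
    by rewrite divr_gt0// oppr_gt0.
  move=> t /andP[t0' tt0].
  have te : t < eta by apply: lt_le_trans tt0 _; rewrite ge_min lexx.
  have tD : t < (- Dv) / (4 * C) by apply: lt_le_trans tt0 _; rewrite ge_min lexx orbT.
  have := happ t; rewrite t0' te => /(_ isT) h.
  rewrite -/Dv ler_norml in h; case/andP: h => _ h.
  have Ct : 4 * C * t <= - Dv.
    by have := ltW tD; rewrite ler_pdivlMr ?mulr_gt0// mulrC.
  have Ct2 : 4 * C * t * t <= - Dv * t by rewrite ler_wpM2r// ltW.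
  rewrite expr2 in h; lra.
Qed.
End Final2.

End HelpersD.
Import HelpersD.

Theorem proposition2p2 (R : realType) (N : nat) (hN : (1 <= N)%N) (s : R)
  (hs1 : 2^-1 < s) (hs2 : s < 1)
  (phi : 'rV[R]_N -> R) (hb : bounded_fun_on phi) (hm : borel_fun phi)
  (x p : 'rV[R]_N) (C eta : R) (hC : C11_at phi x p C eta) (hp : p != 0) :
  Ls s phi x =
  int_mus s (fun t => Lphi phi x (t *: ((enorm p)^-1 *: p))
                                 (t *: ((enorm p)^-1 *: p))).
Proof.
have np0 : 0 < enorm p := @enorm_gt0 R N p hp.
set u := (enorm p)^-1 *: p.
have hu : enorm u = 1.
  by rewrite /u enormZ ger0_norm ?invr_ge0 ?ltW// mulVf ?gt_eqF.
have pu : p = enorm p *: u by rewrite /u scalerA mulfV ?gt_eqF// scale1r.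
have dpu y : dotp p y = enorm p * dotp u y by rewrite {1}pu (@dotpZl R N).
have s0 : 0 <= s by apply: le_trans (ltW hs1); rewrite invr_ge0.
have [c0|c0] : Cs s = 0 \/ 0 < Cs s.
  by move: (@Cs_ge0 R s s0); rewrite le_eqVlt => /orP[/eqP<-|]; [left|right].
  rewrite /Ls; apply: (@supinf R _ (@usphere R N)
    (fun y yt => int_mus s (fun t => Lphi phi x (t *: y) (t *: yt))) u).
  - exact: hu.
  - by move=> yt _; rewrite !(@int_mus_c0 R s _ c0).
  - by move=> y _; exists u; [exact: hu|]; rewrite !(@int_mus_c0 R s _ c0).
rewrite /Ls; apply: (@supinf R _ (@usphere R N)
  (fun y yt => int_mus s (fun t => Lphi phi x (t *: y) (t *: yt))) u).
- exact: hu.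
- move=> yt hyt; case: (eqVneq yt u) => [->|ne]; first exact: lexx.
  have lt1 := @sphere_dot_lt R N u yt hu hyt ne.
  have hD : 0 < dotp p u - dotp p yt.
    rewrite !dpu (@sphere_dotp R N u hu) -mulrBr mulr_gt0// subr_gt0//.
  by rewrite ((@I_inf R N s phi x p C eta u yt hs1 c0 hb hm hC hu hyt).1 hD) leey.
- move=> y hy; exists u; first exact: hu.
  case: (eqVneq y u) => [->|ne]; first exact: lexx.
  have lt1 := @sphere_dot_lt R N u y hu hy ne.
  have hD : dotp p y - dotp p u < 0.
    rewrite !dpu (@sphere_dotp R N u hu) -mulrBr pmulr_rlt0// subr_lt0//.
  by rewrite ((@I_inf R N s phi x p C eta y u hs1 c0 hb hm hC hy hu).2 hD) leNye.
Qed.
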